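(* Let $\mathcal E$ be an exact category. The assignments $\mathcal S\mapsto \mathsf M_{\mathcal S}:=\{[X]\in\mathsf M(\mathcal E)\mid X\in\mathcal S\}$ and $F\mapsto \mathcal D_F:=\{X\in\mathcal E\mid [X]\in F\}$ are mutually inverse inclusion-preserving bijections between $\operatorname{Serre}(\mathcal E)$ and $\operatorname{Face}(\mathsf M(\mathcal E))$, and $F\mapsto \mathsf M(\mathcal E)\setminus F$ is an inclusion-reversing bijection from $\operatorname{Face}(\mathsf M(\mathcal E))$ to $\operatorname{MSpec}\mathsf M(\mathcal E)$. Hence there are bijections between $\operatorname{Serre}(\mathcal E)$, $\operatorname{Face}(\mathsf M(\mathcal E))$ and $\operatorname{MSpec}\mathsf M(\mathcal E)$.
   Context: All categories are skeletally small and subcategories are full and closed under isomorphisms; $|\mathcal C|$ is the set of isomorphism classes of objects. An exact category $\mathcal E$ is an additive full subcategory of an abelian category $\mathcal A$ closed under extensions; a conflation in $\mathcal E$ is a short exact sequence $0\to X\to Y\to Z\to0$ in $\mathcal A$ with $X,Y,Z\in\mathcal E$. Monoids are commutative, written additively. The Grothendieck monoid $\mathsf M(\mathcal E)$ is a monoid with a map $|\mathcal E|\to\mathsf M(\mathcal E)$, $X\mapsto[X]$, with $[0]=0$ and $[Y]=[X]+[Z]$ for every conflation, universal among such maps to monoids. A Serre subcategory of $\mathcal E$ is an additive subcategory $\mathcal S$ such that for every conflation $0\to X\to Y\to Z\to0$, $Y\in\mathcal S$ iff $X,Z\in\mathcal S$; $\operatorname{Serre}(\mathcal E)$ is the set of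 these. A face of a monoid $M$ is a submonoid $F$ with $x+y\in F$ iff $x\in F$ and $y\in F$; $\operatorname{Face}(M)$ is the set of faces. A prime ideal of $M$ is a subset $\mathfrak p\ne M$ with $x+a\in\mathfrak p$ whenever $x\in\mathfrak p$, $a\in M$, and such that $x+y\in\mathfrak p$ implies $x\in\mathfrak p$ or $y\in\mathfrak p$; $\operatorname{MSpec}M$ is the set of prime ideals. *)

(* Defs.v *)
From HB Require Import structures.
From mathcomp Require Import all_boot all_order all_algebra.
Set Implicit Arguments. Unset Strict Implicit. Unset Printing Implicit Defensive.
Import GRing.Theory.
Local Open Scope ring_scope.

Record PreAdd := {
  obj :> Type;
  hom : obj -> obj -> zmodType;
  comp : forall X Y Z : obj, hom Y Z -> hom X Y -> hom X Z;
  idm : forall X : obj, hom X X;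
  comp_assoc : forall (W X Y Z : obj) (h : hom Y Z) (g : hom X Y) (f : hom W X),
      comp h (comp g f) = comp (comp h g) f;
  comp_id_l : forall (X Y : obj) (f : hom X Y), comp (idm Y) f = f;
  comp_id_r : forall (X Y : obj) (f : hom X Y), comp f (idm X) = f;
  comp_addl : forall (X Y Z : obj) (g g' : hom Y Z) (f : hom X Y),
      comp (g + g') f = comp g f + comp g' f;
  comp_addr : forall (X Y Z : obj) (g : hom Y Z) (f f' : hom X Y),
      comp g (f + f') = comp g f + comp g f'
}.
Arguments comp {p X Y Z} g f.
Arguments idm {p} X.

Section CatDefs.
Variable C : PreAdd.

Definition mono (X Y : C) (f : hom X Y) : Prop :=
  forall (W : C) (a b : hom W X), comp f a = comp f b -> a = b.
Definition epi (X Y : C) (g : hom X Y) : Prop :=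
  forall (W : C) (a b : hom Y W), comp a g = comp b g -> a = b.

Definition is_zero_obj (Z : C) : Prop :=
  forall X : C, (forall f g : hom X Z, f = g) /\ (forall f g : hom Z X, f = g).

Definition isom (X Y : C) : Prop :=
  exists (f : hom X Y) (g : hom Y X), comp g f = idm X /\ comp f g = idm Y.

Definition is_kernel (X Y K : C) (f : hom X Y) (k : hom K X) : Prop :=
  comp f k = 0 /\
  forall (W : C) (a : hom W X), comp f a = 0 -> exists! b : hom W K, comp k b = a.

Definition is_cokernel (X Y Q : C) (f : hom X Y) (c : hom Y Q) : Prop :=
  comp c f = 0 /\
  forall (W : C) (a : hom Y W), comp a f = 0 -> exists! b : hom Q W, comp b c = a.

Definition is_biproduct (X Y P : C) (i1 : hom X P) (i2 : hom Y P)
    (p1 : hom P X) (p2 : hom P Y) : Prop :=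
  [/\ comp p1 i1 = idm X, comp p2 i2 = idm Y, comp p2 i1 = 0, comp p1 i2 = 0
    & comp i1 p1 + comp i2 p2 = idm P].

Record abelian : Prop := {
  ab_zero : exists Z : C, is_zero_obj Z;
  ab_biprod : forall X Y : C, exists (P : C) (i1 : hom X P) (i2 : hom Y P)
      (p1 : hom P X) (p2 : hom P Y), is_biproduct i1 i2 p1 p2;
  ab_ker : forall (X Y : C) (f : hom X Y), exists (K : C) (k : hom K X), is_kernel f k;
  ab_coker : forall (X Y : C) (f : hom X Y), exists (Q : C) (c : hom Y Q), is_cokernel f c;
  ab_mono_kernel : forall (X Y : C) (f : hom X Y), mono f ->
      exists (Z : C) (g : hom Y Z), is_kernel g f;
  ab_epi_cokernel : forall (X Y : C) (g : hom X Y), epi g ->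
      exists (W : C) (f : hom W X), is_cokernel f g
}.

Definition short_exact (X Y Z : C) (f : hom X Y) (g : hom Y Z) : Prop :=
  is_kernel g f /\ is_cokernel f g.

Definition additive_subcat (S : C -> Prop) : Prop :=
  [/\ forall X Y : C, S X -> isom X Y -> S Y,
      exists Z : C, is_zero_obj Z /\ S Z
    & forall (X Y P : C) (i1 : hom X P) (i2 : hom Y P) (p1 : hom P X) (p2 : hom P Y),
        is_biproduct i1 i2 p1 p2 -> S X -> S Y -> S P].

Definition exact_cat (E : C -> Prop) : Prop :=
  additive_subcat E /\
  forall (X Y Z : C) (f : hom X Y) (g : hom Y Z),
    short_exact f g -> E X -> E Z -> E Y.

Definition conflation (E : C -> Prop) (X Y Z : C) (f : hom X Y) (g : hom Y Z) : Prop :=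
  [/\ E X, E Y, E Z & short_exact f g].

Definition serre (E S : C -> Prop) : Prop :=
  [/\ forall X : C, S X -> E X,
      additive_subcat S
    & forall (X Y Z : C) (f : hom X Y) (g : hom Y Z),
        conflation E f g -> (S Y <-> S X /\ S Z)].

(* maps |E| -> N (i.e. iso-invariant on E) with [0] = 0 and additive on conflations *)
Definition additive_on (E : C -> Prop) (N : nmodType) (phi : C -> N) : Prop :=
  [/\ forall X Y : C, E X -> isom X Y -> phi X = phi Y,
      forall Z : C, E Z -> is_zero_obj Z -> phi Z = 0
    & forall (X Y Z : C) (f : hom X Y) (g : hom Y Z),
        conflation E f g -> phi Y = phi X + phi Z].

Definition monoid_hom (M N : nmodType) (h : M -> N) : Prop :=
  h 0 = 0 /\ forall a b, h (a + b) = h a + h b.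

Definition groth_monoid (E : C -> Prop) (M : nmodType) (iota : C -> M) : Prop :=
  additive_on E iota /\
  forall (N : nmodType) (phi : C -> N), additive_on E phi ->
    exists h : M -> N, [/\ monoid_hom h,
      (forall X : C, E X -> h (iota X) = phi X)
    & forall h' : M -> N, monoid_hom h' ->
        (forall X : C, E X -> h' (iota X) = phi X) -> forall m, h' m = h m].

Definition M_of (E : C -> Prop) (M : nmodType) (iota : C -> M) (S : C -> Prop) : M -> Prop :=
  fun m => exists X : C, [/\ E X, S X & iota X = m].
Definition D_of (E : C -> Prop) (M : nmodType) (iota : C -> M) (F : M -> Prop) : C -> Prop :=
  fun X => E X /\ F (iota X).

End CatDefs.

Definition face (M : nmodType) (F : M -> Prop) : Prop :=
  F 0 /\ forall x y : M, F (x + y) <-> F x /\ F y.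

Definition prime_ideal (M : nmodType) (p : M -> Prop) : Prop :=
  [/\ exists m : M, ~ p m,
      forall x a : M, p x -> p (x + a)
    & forall x y : M, p (x + y) -> p x \/ p y].

Definition complement (T : Type) (P : T -> Prop) : T -> Prop := fun t => ~ P t.

(* Main.v *)
From HB Require Import structures.
Require Import Defs.
From mathcomp Require Import all_boot all_order all_algebra.
From Stdlib Require Import Classical ClassicalEpsilon.
Import Defs.
Set Implicit Arguments. Unset Strict Implicit. Unset Printing Implicit Defensive.
Import GRing.Theory.
Local Open Scope ring_scope.

Definition bor := bool.
HB.instance Definition _ := Choice.on bor.
HB.instance Definition _ := GRing.isNmodule.Build bor orbA orbC orFb.
Lemma bor0 : (0 : bor) = false. Proof. by []. Qed.
Lemma borD (a b : bor) : a + b = a || b. Proof. by []. Qed.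

Definition pb (T : Type) (P : T -> Prop) (x : T) : bool :=
  if excluded_middle_informative (P x) then true else false.
Lemma pbP (T : Type) (P : T -> Prop) (x : T) : reflect (P x) (pb P x).
Proof. rewrite /pb; case: excluded_middle_informative => H; constructor => //. Qed.

Definition subM (M : nmodType) (P : M -> Prop) (H0 : P 0)
  (HD : forall x y, P x -> P y -> P (x + y)) : Type := {m : M | pb P m}.
Section SubM.
Variables (M : nmodType) (P : M -> Prop) (H0 : P 0)
  (HD : forall x y, P x -> P y -> P (x + y)).
HB.instance Definition _ := Choice.copy (subM H0 HD) {m : M | pb P m}.
Definition sz : subM H0 HD := exist _ 0 (introT (pbP P 0) H0).
Definition sadd (a b : subM H0 HD) : subM H0 HD :=
  exist _ (val a + val b) (introT (pbP P _) (HD (elimT (pbP P _) (valP a)) (elimT (pbP P _) (valP b)))).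
Lemma saddA : associative sadd.
Proof. by move=> a b c; apply: val_inj; rewrite /= addrA. Qed.
Lemma saddC : commutative sadd.
Proof. by move=> a b; apply: val_inj; rewrite /= addrC. Qed.
Lemma sadd0 : left_id sz sadd.
Proof. by move=> a; apply: val_inj; rewrite /= add0r. Qed.
HB.instance Definition _ := GRing.isNmodule.Build (subM H0 HD) saddA saddC sadd0.
End SubM.
Section Cat.
Variable C : PreAdd.

Lemma comp0l (X Y Z : C) (f : hom X Y) : comp (0 : hom Y Z) f = 0.
Proof.
have H := comp_addl (0 : hom Y Z) 0 f; rewrite addr0 in H.
by have := congr1 (fun t => t - comp 0 f) H; rewrite /= subrr addrK.
Qed.
Lemma comp0r (X Y Z : C) (g : hom Y Z) : comp g (0 : hom X Y) = 0.
Proof.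
have H := comp_addr g (0 : hom X Y) 0; rewrite addr0 in H.
by have := congr1 (fun t => t - comp g 0) H; rewrite /= subrr addrK.
Qed.

Lemma biprod_exact (X Y P : C) (i1 : hom X P) (i2 : hom Y P) (p1 : hom P X) (p2 : hom P Y) :
  is_biproduct i1 i2 p1 p2 -> short_exact i1 p2.
Proof.
case=> h11 h22 h21 h12 hs; split; split=> //.
- move=> W a Ha; exists (comp p1 a); split.
  + have := comp_id_l a; rewrite -hs comp_addl -!comp_assoc Ha comp0r addr0 => ->.
    by [].
  + by move=> b Hb; rewrite -Hb comp_assoc h11 comp_id_l.
- move=> W a Ha; exists (comp a i2); split.
  + have := comp_id_r a; rewrite -hs comp_addr !comp_assoc Ha comp0l add0r => ->.
    by [].
  + by move=> b Hb; rewrite -Hb -comp_assoc h22 comp_id_r.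
Qed.

Lemma isom_sym (X Y : C) : isom X Y -> isom Y X.
Proof. by case=> f [g [H1 H2]]; exists g, f. Qed.

Lemma zero_isom (X Y : C) : is_zero_obj X -> is_zero_obj Y -> isom X Y.
Proof.
move=> HX HY; exists 0, 0; split.
- by apply (HX X).1.
- by apply (HY Y).1.
Qed.
End Cat.

Section Main.
Variables (C : PreAdd) (HC : abelian C) (E : C -> Prop) (HE : exact_cat E)
  (M : nmodType) (iota : C -> M) (HM : groth_monoid E iota).

Lemma E_iso (X Y : C) : E X -> isom X Y -> E Y.
Proof. by case: HE => [[H _ _] _]; apply: H. Qed.

Lemma E_zero : exists Z : C, is_zero_obj Z /\ E Z.
Proof. by case: HE => [[_ H _] _]. Qed.

Lemma E_biprod (X Y : C) : E X -> E Y -> exists P, E P /\ iota P = iota X + iota Y.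
Proof.
move=> HX HY.
have [P [i1 [i2 [p1 [p2 Hb]]]]] := ab_biprod HC X Y.
have Hs := biprod_exact Hb.
have EP : E P by case: HE => _ H; apply: (H _ _ _ _ _ Hs).
exists P; split => //.
case: HM => [[_ _ H] _]; exact: (H _ _ _ i1 p2).
Qed.

Lemma iota0 (Z : C) : E Z -> is_zero_obj Z -> iota Z = 0.
Proof. by case: HM => [[_ H _] _]; apply: H. Qed.

Definition inIm (m : M) := exists X, E X /\ iota X = m.
Lemma inIm0 : inIm 0.
Proof. have [Z [HZ EZ]] := E_zero; exists Z; split => //; exact: iota0. Qed.
Lemma inImD x y : inIm x -> inIm y -> inIm (x + y).
Proof.
move=> [X [EX <-]] [Y [EY <-]]; have [P [EP HP]] := E_biprod EX EY.
by exists P.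
Qed.

Lemma iota_surj (m : M) : inIm m.
Proof.
pose N := subM inIm0 inImD.
pose phi (X : C) : N := insubd (sz inIm0 inImD) (iota X).
have phiE X : E X -> val (phi X) = iota X.
  move=> EX; rewrite /phi insubdK //; apply/pbP; by exists X.
have Hphi : additive_on E phi.
  case: HM => [[Hi Hz Ha] _]; split.
  - by move=> X Y EX HXY; rewrite /phi (Hi _ _ EX HXY).
  - move=> Z EZ HZ; apply: val_inj; transitivity (iota Z); first exact: phiE.
    by rewrite Hz.
  - move=> X Y Z f g Hc; have [EX EY EZ _] := Hc.
    apply: val_inj; transitivity (iota Y); first exact: phiE.
    rewrite (Ha _ _ _ f g) //; congr (_ + _); symmetry; exact: phiE.
case: HM => [[Hi Hz Ha] Hu].
have [h [[h0 hD] hE _]] := Hu _ _ Hphi.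
have Hiota : additive_on E iota by [].
have [h1 [_ _ hU]] := Hu _ _ Hiota.
have e1 : (fun x : M => x) m = h1 m.
  apply: hU => //; split => //.
have e2 : val (h m) = h1 m.
  apply: (hU (fun x => val (h x))).
  - split; first by rewrite h0.
    by move=> a b; rewrite hD.
  - move=> X EX; rewrite hE //; have := phiE X EX; exact.
have := valP (h m); rewrite e2 -e1 => /pbP; done.
Qed.

Lemma serre_zero (S : C -> Prop) : serre E S -> forall Z, is_zero_obj Z -> S Z.
Proof.
case=> _ [Siso [Z0 [HZ0 SZ0]] _] _ Z HZ; exact: Siso SZ0 (zero_isom HZ0 HZ).
Qed.

Lemma serre_h (S : C -> Prop) : serre E S -> exists h : M -> bor,
  monoid_hom h /\ forall X, E X -> (h (iota X) = false <-> S X).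
Proof.
move=> HS; have HSz := serre_zero HS.
case: HS => _ [Siso _ _] Sc.
pose psi (X : C) : bor := ~~ pb S X.
have Hpsi : additive_on E psi.
  split.
  - move=> X Y EX HXY; rewrite /psi.
    have HYX := isom_sym HXY.
    by case: pbP => HX; case: pbP => HY //; [case: HY; exact: Siso HX HXY | case: HX; exact: Siso HY HYX].
  - by move=> Z EZ HZ; rewrite /psi; case: pbP => // [[]]; apply: HSz.
  - move=> X Y Z f g Hc; have := Sc _ _ _ _ _ Hc; rewrite /psi borD.
    by case: (pbP S X); case: (pbP S Y); case: (pbP S Z); tauto.
case: HM => _ Hu; have [h [hh hE _]] := Hu _ _ Hpsi.
exists h; split => // X EX; rewrite hE // /psi.
by case: pbP.
Qed.

Lemma MS_iff (S : C -> Prop) (h : M -> bor) :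
  (forall X, E X -> (h (iota X) = false <-> S X)) ->
  forall m, M_of E iota S m <-> h m = false.
Proof.
move=> Hk m; split.
- by case=> X [EX SX <-]; apply/Hk.
- move=> Hm; have [X [EX HX]] := iota_surj m; exists X; split => //.
  by apply/Hk => //; rewrite HX.
Qed.

Lemma face_D (F : M -> Prop) : face F -> serre E (D_of E iota F).
Proof.
move=> [F0 FD]; case: HM => [[Hi Hz Ha] _].
split.
- by move=> X [].
- split.
  + move=> X Y [EX FX] HXY; split; first exact: E_iso EX HXY.
    by rewrite -(Hi _ _ EX HXY).
  + have [Z [HZ EZ]] := E_zero; exists Z; split => //; split => //.
    by rewrite (Hz _ EZ HZ).
  + move=> X Y P i1 i2 p1 p2 Hb [EX FX] [EY FY].
    have Hs := biprod_exact Hb.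
    have EP : E P by case: HE => _ H; apply: (H _ _ _ _ _ Hs).
    split => //; rewrite (Ha _ _ _ i1 p2) //; exact/FD.
- move=> X Y Z f g Hc; have [EX EY EZ _] := Hc.
  rewrite /D_of (Ha _ _ _ f g Hc) FD; tauto.
Qed.
End Main.

Theorem mainTheorem2 (C : PreAdd) (HC : abelian C) (E : C -> Prop)
  (HE : exact_cat E) (M : nmodType) (iota : C -> M) (HM : groth_monoid E iota) :
  (* S |-> M_S and F |-> D_F are well defined *)
  (forall S : C -> Prop, serre E S -> face (M_of E iota S)) /\
  (forall F : M -> Prop, face F -> serre E (D_of E iota F)) /\
  (* mutually inverse *)
  (forall S : C -> Prop, serre E S -> forall X : C, D_of E iota (M_of E iota S) X <-> S X) /\
  (forall F : M -> Prop, face F -> forall m : M, M_of E iota (D_of E iota F) m <-> F m) /\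
  (* inclusion preserving *)
  (forall S S' : C -> Prop, serre E S -> serre E S' -> (forall X, S X -> S' X) ->
     forall m, M_of E iota S m -> M_of E iota S' m) /\
  (forall F F' : M -> Prop, face F -> face F' -> (forall m, F m -> F' m) ->
     forall X, D_of E iota F X -> D_of E iota F' X) /\
  (* F |-> M \ F is a bijection Face(M) -> MSpec M *)
  (forall F : M -> Prop, face F -> prime_ideal (complement F)) /\
  (forall p : M -> Prop, prime_ideal p ->
     exists F : M -> Prop, face F /\ forall m, complement F m <-> p m) /\
  (forall F F' : M -> Prop, face F -> face F' ->
     (forall m, complement F m <-> complement F' m) -> forall m, F m <-> F' m) /\
  (* inclusion reversing *)
  (forall F F' : M -> Prop, face F -> face F' -> (forall m, F m -> F' m) ->
     forall m, complement F' m -> complement F m).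
Proof.
split.
  move=> S HS; have [h [[h0 hD] Hk]] := serre_h HM HS.
  have Hi := MS_iff HC HE HM Hk.
  split; first by apply/Hi; rewrite h0.
  move=> x y; rewrite !Hi hD borD; case: (h x); case: (h y); intuition.
split; first by move=> F HF; exact: face_D.
split.
  move=> S HS X; have [h [_ Hk]] := serre_h HM HS; split.
  - case=> EX [W [EW SW HW]]; apply/Hk => //; rewrite -HW; exact/Hk.
  - move=> SX; have EX : E X by case: HS => H _ _; apply: H.
    by split => //; exists X.
split.
  move=> F HF m; split.
  - by case=> X [EX [_ FX] <-].
  - move=> Fm; have [X [EX HX]] := iota_surj HC HE HM m.
    by exists X; split => //; split => //; rewrite HX.
split.
  by move=> S S' _ _ HSS' m [X [EX SX <-]]; exists X; split => //; apply: HSS'.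
split.
  by move=> F F' _ _ HFF' X [EX FX]; split => //; apply: HFF'.
split.
  move=> F [F0 FD]; split.
  - by exists 0; rewrite /complement.
  - by move=> x a Hx Hxa; apply: Hx; exact: (proj1 (FD x a) Hxa).1.
  - move=> x y Hxy; rewrite /complement; apply: NNPP => H; apply: Hxy.
    apply/FD; split; apply: NNPP => H'; apply: H; [left|right]; exact: H'.
split.
  move=> p [[m0 Hm0] pA pP]; exists (complement p); split.
  - split.
    + by move=> H0; apply: Hm0; rewrite -(add0r m0); exact: pA.
    + move=> x y; split.
      * move=> H; split => Hx; apply: H; [exact: pA | rewrite addrC; exact: pA].
      * by move=> [Hx Hy] Hxy; case: (pP _ _ Hxy).
  - move=> m; rewrite /complement; split; [exact: NNPP | tauto].
split.
  move=> F F' _ _ H m; have := H m; rewrite /complement => Hm; split => Fm.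
  - by apply: NNPP => Hn; apply: (proj2 Hm Hn).
  - by apply: NNPP => Hn; apply: (proj1 Hm Hn).
by move=> F F' _ _ HFF' m Hm Fm; apply: Hm; apply: HFF'.
Qed.
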